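(* Let $V$ be a finite set of variables and $\mathcal C=\{C_1,\dots,C_m\}$ a set of betweenness constraints over $V$. Let $\phi:V\to\{0,1,2,3\}$ be chosen uniformly at random and let $X=w(\mathcal C,\phi)$. Then $X$ can be expressed as a polynomial of degree $6$ in independent random variables, each uniformly distributed on $\{-1,1\}$.
   Context: A betweenness constraint is $(v_i,\{v_j,v_k\})$ with $v_i,v_j,v_k\in V$ distinct; a bijection $\alpha:V\to\{1,\dots,|V|\}$ satisfies it if $\alpha(v_j)<\alpha(v_i)<\alpha(v_k)$ or $\alpha(v_k)<\alpha(v_i)<\alpha(v_j)$. For $\phi:V\to\{0,1,2,3\}$ let $\ell_i(\phi)=|\phi^{-1}(i)|$. A random $\phi$-compatible bijection $\alpha$ is obtained by assigning, uniformly at random, the values $\sum_{i<j}\ell_i(\phi)+1,\dots,\sum_{i\le j}\ell_i(\phi)$ bijectively to the variables $v$ with $\phi(v)=j$, for each $j=0,1,2,3$. For a constraint $C_p$ let $\nu_p(\alpha)=1$ if $\alpha$ satisfies $C_p$ and $0$ otherwise; define $w(C_p,\phi)=\mathbb E[\nu_p(\alpha)]-1/3$, the expectation over a random $\phi$-compatible bijection $\alpha$ for fixed $\phi$, and $w(\mathcal C,\phi)=\sum_{p=1}^m w(C_p,\phi)$. *)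

(* Defs.v *)
From HB Require Import structures.
From mathcomp Require Import all_boot all_order all_algebra.
From mathcomp Require Import mpoly.
Set Implicit Arguments. Unset Strict Implicit. Unset Printing Implicit Defensive.
Import Order.TTheory GRing.Theory Num.Theory.
Local Open Scope ring_scope.

(* A betweenness constraint (v_i, {v_j, v_k}) is encoded as the triple (v_i, v_j, v_k). *)
Definition constraint (V : finType) := (V * V * V)%type.

Definition constraint_distinct (V : finType) (c : constraint V) : bool :=
  let: (vi, vj, vk) := c in [&& vi != vj, vi != vk & vj != vk].

Definition ell (V : finType) (phi : {ffun V -> 'I_4}) (i : 'I_4) : nat :=
  #|[set v | phi v == i]|.

Definition lo (V : finType) (phi : {ffun V -> 'I_4}) (j : 'I_4) : nat :=
  (\sum_(i < 4 | (i < j)%N) ell phi i)%N.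

(* Bijections V -> {1..|V|} are represented 0-based as injective maps V -> 'I_|V|.
   alpha is phi-compatible if every v with phi v = j gets a value in the block
   [sum_{i<j} l_i, sum_{i<=j} l_i) (0-based version of the paper's block). *)
Definition compatible (V : finType) (phi : {ffun V -> 'I_4})
    (alpha : {ffun V -> 'I_#|V|}) : bool :=
  injectiveb alpha &&
  [forall v, (lo phi (phi v) <= alpha v)%N && (alpha v < lo phi (phi v) + ell phi (phi v))%N].

Definition satisfies (V : finType) (c : constraint V) (alpha : {ffun V -> 'I_#|V|}) : bool :=
  let: (vi, vj, vk) := c in
  ((alpha vj < alpha vi)%N && (alpha vi < alpha vk)%N) ||
  ((alpha vk < alpha vi)%N && (alpha vi < alpha vj)%N).

(* w(C_p, phi) = E[nu_p(alpha)] - 1/3, alpha a uniformly random phi-compatible bijection *)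
Definition wC (R : realFieldType) (V : finType) (c : constraint V) (phi : {ffun V -> 'I_4}) : R :=
  (#|[set alpha | compatible phi alpha && satisfies c alpha]|%:R
     / #|[set alpha | compatible phi alpha]|%:R) - 3%:R^-1.

Definition wCs (R : realFieldType) (V : finType) (cs : seq (constraint V)) (phi : {ffun V -> 'I_4}) : R :=
  \sum_(c <- cs) wC R c phi.

Definition pm1 (R : realFieldType) (b : bool) : R := if b then 1 else -1.

(* Main.v *)
Require Import Defs.
From HB Require Import structures.
From mathcomp Require Import all_boot all_order all_algebra all_fingroup zify.
From mathcomp Require Import mpoly.
Import GRing.Theory Num.Theory.
Set Implicit Arguments. Unset Strict Implicit. Unset Printing Implicit Defensive.

Section Comb.
Variables (V : finType) (phi : {ffun V -> 'I_4}).

Lemma card_lt (j : 'I_4) : #|[set u | phi u < j]| = lo phi j.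
Proof.
rewrite /lo /ell -sum1_card (partition_big (fun u => phi u) (fun i : 'I_4 => i < j)) /=; last first.
  by move=> u; rewrite inE.
apply: eq_bigr => i ij; rewrite -sum1_card; apply: eq_bigl => u; rewrite !inE.
by rewrite andb_idl // => /eqP ->.
Qed.

Lemma lo_mono (p q : 'I_4) : p < q -> lo phi p + ell phi p <= lo phi q.
Proof.
move=> pq; rewrite [lo phi q](bigID (fun i : 'I_4 => i <= p)) /=.
apply: leq_trans (leq_addr _ _).
rewrite [X in _ <= X](_ : _ = \sum_(i < 4 | i <= p) ell phi i); last first.
  apply: eq_bigl => i; case: (leqP i p) => ip; rewrite ?andbT ?andbF //.
  by rewrite (leq_ltn_trans ip pq).
rewrite [X in _ <= X](bigD1 p) //= addnC /lo; apply/eq_leq; congr (_ + _).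
by apply: eq_bigl => i; rewrite ltn_neqAle andbC.
Qed.

Lemma blk alpha v : compatible phi alpha ->
  lo phi (phi v) <= alpha v < lo phi (phi v) + ell phi (phi v).
Proof. by case/andP=> _ /forallP /(_ v). Qed.

Lemma ord_lt alpha a b : compatible phi alpha -> phi a < phi b -> alpha a < alpha b.
Proof.
move=> C ab; have /andP[_ h1] := blk a C; have /andP[h2 _] := blk b C.
exact: leq_trans h1 (leq_trans (lo_mono ab) h2).
Qed.


Local Notation A := {ffun V -> 'I_#|V|}.
Definition cnt (P : pred A) : nat := \sum_(alpha | compatible phi alpha) P alpha.

Lemma card_cnt (P : pred A) : #|[set alpha | compatible phi alpha && P alpha]| = cnt P.
Proof.
rewrite /cnt -sum1_card.
rewrite (eq_bigl (fun alpha => compatible phi alpha && P alpha)); last by move=> a; rewrite inE.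
by rewrite big_mkcondr /=; apply: eq_bigr => a _; case: (P a).
Qed.

Definition sw (a b : V) (alpha : A) : A := [ffun v => alpha (tperm a b v)].

Lemma sw_inv a b : cancel (sw a b) (sw a b).
Proof. by move=> alpha; apply/ffunP => v; rewrite !ffunE tpermK. Qed.

Lemma phi_t a b v : phi a = phi b -> phi (tperm a b v) = phi v.
Proof. by move=> ab; case: tpermP => [->|->|//]. Qed.

Lemma compat_sw1 a b alpha : phi a = phi b -> compatible phi alpha -> compatible phi (sw a b alpha).
Proof.
move=> ab C; have /andP[/injectiveP inj _] := C; apply/andP; split.
  by apply/injectiveP => u v; rewrite !ffunE => /inj /perm_inj.
apply/forallP => v; rewrite ffunE -(phi_t v ab); exact: blk.
Qed.

Lemma compat_sw a b alpha : phi a = phi b -> compatible phi (sw a b alpha) = compatible phi alpha.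
Proof.
move=> ab; apply/idP/idP => [C|]; last exact: compat_sw1.
by rewrite -(sw_inv a b alpha); apply: compat_sw1.
Qed.

Lemma cnt_sw a b (P : pred A) : phi a = phi b -> cnt P = cnt (fun alpha => P (sw a b alpha)).
Proof.
move=> ab; rewrite /cnt (reindex_inj (can_inj (sw_inv a b))) /=.
by apply: eq_bigl => alpha; rewrite compat_sw.
Qed.

Lemma eq_cnt (P Q : pred A) : (forall alpha, compatible phi alpha -> P alpha = Q alpha) -> cnt P = cnt Q.
Proof. by move=> h; apply: eq_bigr => alpha /h ->. Qed.

Definition key (v : V) : nat := enum_rank v + #|V| * phi v.

Lemma key_lt u v : phi u < phi v -> key u < key v.
Proof.
move=> h; rewrite /key.
move: (nat_of_ord (enum_rank u)) (ltn_ord (enum_rank u)) (nat_of_ord (enum_rank v)) (ltn_ord (enum_rank v)).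
move: (nat_of_ord (phi u)) (nat_of_ord (phi v)) h; move: #|V| => N p q h x hx y hy.
nia.
Qed.

Lemma key_inj : injective key.
Proof.
move=> u v; rewrite /key => e.
have hu := ltn_ord (enum_rank u); have hv := ltn_ord (enum_rank v).
have e1 : (enum_rank u + #|V| * phi u) %% #|V| = (enum_rank v + #|V| * phi v) %% #|V| by rewrite e.
rewrite -modnDmr modnMr addn0 -[in RHS]modnDmr modnMr addn0 !modn_small // in e1.
by apply: enum_rank_inj; apply: val_inj.
Qed.

Definition a0f (v : V) : nat := #|[set u | key u < key v]|.

Lemma a0f_lt v : a0f v < #|V|.
Proof.
rewrite /a0f; have h : [set u | key u < key v] \subset [set~ v].
  by apply/subsetP => u; rewrite !inE; apply: contraTneq => ->; rewrite ltnn.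
apply: leq_ltn_trans (subset_leq_card h) _ ; rewrite cardsC1 ltn_predL.
by apply/card_gt0P; exists v.
Qed.

Lemma a0f_mono u v : key u < key v -> a0f u < a0f v.
Proof.
move=> h; apply: proper_card; apply/properP; split.
  by apply/subsetP => w; rewrite !inE => /ltn_trans; apply.
by exists u; rewrite !inE ?ltnn.
Qed.

Lemma a0f_inj : injective a0f.
Proof.
move=> u v e; apply: key_inj; case: (ltngtP (key u) (key v)) => // /a0f_mono; by rewrite e ltnn.
Qed.

Definition alpha0 : A := [ffun v => Ordinal (a0f_lt v)].

Lemma alpha0_compat : compatible phi alpha0.
Proof.
apply/andP; split.
  by apply/injectiveP => u v; rewrite !ffunE => /(congr1 val) /= /a0f_inj.
apply/forallP => v; rewrite ffunE /=; apply/andP; split.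
  rewrite -card_lt; apply: subset_leq_card; apply/subsetP => u; rewrite !inE; exact: key_lt.
have h : [set u | key u < key v] \subset
    [set u | phi u < phi v] :|: ([set u | phi u == phi v] :\ v).
  apply/subsetP => u; rewrite !inE => h.
  have uv : u != v by apply: contraTneq h => ->; rewrite ltnn.
  case: (ltngtP (phi u) (phi v)) => [//|/key_lt|/val_inj ->]; last by rewrite eqxx uv orbT.
  by rewrite ltnNge ltnW.
apply: leq_ltn_trans (subset_leq_card h) _.
apply: leq_ltn_trans (leq_card_setU _ _).1 _.
rewrite card_lt /ell [in X in _ < X](cardsD1 v) !inE eqxx /= add1n addnS ltnS.
done.
Qed.

Lemma cnt_pos : 0 < cnt xpredT.
Proof.
rewrite /cnt (bigD1 alpha0) ?alpha0_compat //.
Qed.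

Lemma not_lt alpha a b : compatible phi alpha -> alpha a < alpha b -> phi a <= phi b.
Proof. by move=> C; apply: contraTT; rewrite -ltnNge -leqNgt => h; apply/ltnW/ord_lt. Qed.


Lemma tri (u v w : nat) : u != v -> u != w -> v != w ->
  (((u < v) && (v < w)) + ((v < u) && (u < w)) + ((u < w) && (w < v))
  + ((w < u) && (u < v)) + ((v < w) && (w < u)) + ((w < v) && (v < u)) = 1)%N.
Proof. lia. Qed.

Lemma cnt_add (P Q R : pred A) :
  (forall alpha, compatible phi alpha -> (P alpha + Q alpha = R alpha)%N) -> cnt P + cnt Q = cnt R.
Proof. by move=> h; rewrite /cnt -big_split; apply: eq_bigr => al /h. Qed.

Lemma cnt_const (b : bool) : cnt (fun _ => b) = cnt xpredT * b.
Proof. by case: b; rewrite ?muln1 ?muln0 // /cnt big1. Qed.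

Lemma inj_ne alpha a b : compatible phi alpha -> a != b -> (nat_of_ord (alpha a) != nat_of_ord (alpha b)).
Proof.
move=> C ab; have /andP[/injectiveP inj _] := C.
by apply/eqP => /val_inj /inj /eqP; rewrite (negbTE ab).
Qed.

Lemma lt_iff alpha a b : compatible phi alpha -> phi a != phi b -> (alpha a < alpha b) = (phi a < phi b).
Proof.
move=> C ne; case: (ltngtP (phi a) (phi b)) => [h|h|/val_inj e]; last by rewrite e eqxx in ne.
  exact: ord_lt.
by apply/negbTE; rewrite -leqNgt ltnW // ord_lt.
Qed.

Lemma cnt_half a b : a != b -> cnt xpredT = cnt (fun al => al a < al b) + cnt (fun al => al b < al a).
Proof.
move=> ab; symmetry; apply: cnt_add => al C /=; have := inj_ne C ab; move: (nat_of_ord (al a)) (nat_of_ord (al b)) => u v; lia.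
Qed.

Lemma cnt_swap_lt a b : a != b -> phi a = phi b ->
  cnt (fun al => al a < al b) = cnt (fun al => al b < al a).
Proof.
move=> ab e; rewrite (cnt_sw _ e); apply: eq_cnt => al _; by rewrite !ffunE tpermL tpermR.
Qed.

Definition E (a b c : V) := cnt (fun al => (al a < al b) && (al b < al c)).

Lemma E12 a b c : a != b -> a != c -> b != c -> phi a = phi b -> E a b c = E b a c.
Proof.
move=> ab ac bc e; rewrite /E (cnt_sw _ e); apply: eq_cnt => al _.
by rewrite !ffunE tpermL tpermR tpermD // eq_sym.
Qed.

Lemma E23 a b c : a != b -> a != c -> b != c -> phi b = phi c -> E a b c = E a c b.
Proof.
move=> ab ac bc e; rewrite /E (cnt_sw _ e); apply: eq_cnt => al _.
by rewrite !ffunE tpermL tpermR tpermD // eq_sym.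
Qed.

Definition kk (p q r : 'I_4) : nat := if p == q then (if p == r then 3 else 2) else if p == r then 2 else 1.
Definition ss (p q r : 'I_4) : nat := if (p == q) || (p == r) then 1 else ((q < p < r) || (r < p < q)).

Lemma main (x y z : V) : x != y -> x != z -> y != z ->
  cnt (satisfies (x, y, z)) * kk (phi x) (phi y) (phi z) = cnt xpredT * ss (phi x) (phi y) (phi z).
Proof.
move=> xy xz yz; rewrite /kk /ss.
have [exy|nxy] := eqVneq (phi x) (phi y); have [exz|nxz] := eqVneq (phi x) (phi z) => /=.
-
  have eyz : phi y = phi z by rewrite -exy.
  have -> : cnt (satisfies (x, y, z)) = E y x z + E z x y.
    symmetry; apply: cnt_add => al C /=.
    have := inj_ne C xy; have := inj_ne C xz; have := inj_ne C yz; lia.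
  have e1 : E y x z = E x y z by rewrite (E12 xy xz yz exy).
  have e2 : E z x y = E x y z.
    have zy : z != y by rewrite eq_sym.
    by rewrite -(E12 xz xy zy exz) -(E23 xy xz yz eyz).
  have zx : z != x by rewrite eq_sym.
  have yx : y != x by rewrite eq_sym.
  have zy : z != y by rewrite eq_sym.
  have e3 : E x z y = E x y z by rewrite (E23 xy xz yz eyz).
  have e4 : E y z x = E x y z by rewrite (E23 yz yx zx (esym exz)) e1.
  have e5 : E z y x = E x y z by rewrite -(E12 yz yx zx eyz) e4.
  have hT : cnt xpredT = E x y z + E y x z + E x z y + E z x y + E y z x + E z y x.
    rewrite /E /cnt -!big_split /=; apply: eq_bigr => al C.
    have := tri (inj_ne C xy) (inj_ne C xz) (inj_ne C yz).
    move: (nat_of_ord (al x)) (nat_of_ord (al y)) (nat_of_ord (al z)) => u v w; lia.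
  rewrite hT e1 e2 e3 e4 e5; lia.
- have nzx : phi z != phi x by rewrite eq_sym.
  rewrite muln1 (cnt_half xy) -(cnt_swap_lt xy exy).
  case: (ltngtP (phi x) (phi z)) => [h|h|/val_inj e]; last by rewrite e eqxx in nxz.
  + have -> : cnt (satisfies (x, y, z)) = cnt (fun al => al y < al x).
      apply: eq_cnt => al C /=.
      by rewrite (lt_iff C nxz) (lt_iff C nzx) h (leq_gtF (ltnW h)) andbT orbF.
    by rewrite (cnt_swap_lt xy exy) muln2 addnn.
  + have -> : cnt (satisfies (x, y, z)) = cnt (fun al => al x < al y).
      apply: eq_cnt => al C /=.
      by rewrite (lt_iff C nxz) (lt_iff C nzx) h (leq_gtF (ltnW h)) andbF.
    by rewrite muln2 addnn.
- have nyx : phi y != phi x by rewrite eq_sym.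
  rewrite muln1 (cnt_half xz) -(cnt_swap_lt xz exz).
  case: (ltngtP (phi x) (phi y)) => [h|h|/val_inj e]; last by rewrite e eqxx in nxy.
  + have -> : cnt (satisfies (x, y, z)) = cnt (fun al => al z < al x).
      apply: eq_cnt => al C /=.
      by rewrite (lt_iff C nxy) (lt_iff C nyx) h (leq_gtF (ltnW h)) andbT.
    by rewrite (cnt_swap_lt xz exz) muln2 addnn.
  + have -> : cnt (satisfies (x, y, z)) = cnt (fun al => al x < al z).
      apply: eq_cnt => al C /=.
      by rewrite (lt_iff C nxy) (lt_iff C nyx) h (leq_gtF (ltnW h)) andbF orbF.
    by rewrite muln2 addnn.
- rewrite muln1; have -> : cnt (satisfies (x, y, z)) =
     cnt (fun _ => ((phi y < phi x < phi z) || (phi z < phi x < phi y))).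
    apply: eq_cnt => al C /=; rewrite !lt_iff // ?(eq_sym (phi y)) ?(eq_sym (phi z)) //.
  by rewrite cnt_const.
Qed.

End Comb.

Section Poly.
Local Open Scope ring_scope.
Variable R : realFieldType.

Lemma msizeM2 n (p q : {mpoly R[n]}) : (msize (p * q) <= (msize p + msize q).-1)%N.
Proof.
have [->|nz_p] := eqVneq p 0; first by rewrite mul0r msize0.
have [->|nz_q] := eqVneq q 0; first by rewrite mulr0 msize0.
have [->|nz_pq] := eqVneq (p * q) 0; first by rewrite msize0.
rewrite -!mlead_deg // addSn addnS /= ltnS.
by have /lemc_mdeg := mleadM_le p q; rewrite mdegD.
Qed.

Definition L n (i : 'I_n) (b : bool) : {mpoly R[n]} := 2^-1 *: (1 + pm1 R b *: 'X_i).

Lemma predD_le (a b m1 m2 : nat) : (a <= m1 -> b <= m2 -> (a + b).-1 <= (m1 + m2).-1)%N.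
Proof. lia. Qed.

Lemma msizeL n (i : 'I_n) b : (msize (L i b) <= 2)%N.
Proof.
rewrite /L; apply: leq_trans (msizeZ_le _ _) _; apply: leq_trans (msizeD_le _ _) _.
rewrite geq_max msize1 /=; apply: leq_trans (msizeZ_le _ _) _.
by rewrite msizeX mdeg1.
Qed.

Lemma mevalL n (i : 'I_n) b (eps : 'I_n -> R) c : eps i = pm1 R c ->
  meval eps (L i b) = (b == c)%:R.
Proof.
move=> e; rewrite /L mevalZ mevalD meval1 mevalZ mevalXU e.
have h2 : (2 : R) != 0 by rewrite pnatr_eq0.
by clear e; case: b; case: c; rewrite /pm1 /= ?mulr1 ?mulrN1 ?opprK ?subrr ?mulr0 // mulVf.
Qed.

End Poly.

Section Enc.
Local Open Scope ring_scope.
Variables (R : realFieldType) (V : finType).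
Local Notation n := (#|V| * 2)%N.

Lemma vof_proof (i : 'I_n) : (i %/ 2 < #|V|)%N.
Proof. by rewrite ltn_divLR. Qed.

Definition vof (i : 'I_n) : V := enum_val (Ordinal (vof_proof i)).

Lemma idx_proof (v : V) (e : bool) : (enum_rank v * 2 + e < n)%N.
Proof.
move: (nat_of_ord (enum_rank v)) (ltn_ord (enum_rank v)); move: #|V| => N r hr.
case: e => /=; lia.
Qed.

Definition idx (v : V) (e : bool) : 'I_n := Ordinal (idx_proof v e).

Lemma vof_idx v e : vof (idx v e) = v.
Proof.
rewrite /vof; have -> : Ordinal (vof_proof (idx v e)) = enum_rank v.
  by apply: val_inj; rewrite /= divnMDl // divn_small ?addn0 //; case: e.
exact: enum_rankK.
Qed.

Lemma odd_idx v e : odd (idx v e) = e.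
Proof. by rewrite /= oddD oddM /= andbF /=; case: e. Qed.

Definition bit (p : 'I_4) (e : bool) : bool := if e then odd (p %/ 2) else odd p.

Lemma bit_inj p q : bit p false = bit q false -> bit p true = bit q true -> p = q.
Proof.
by case: p q => [[|[|[|[|?]]]] ?] [[|[|[|[|?]]]] ?] //= _ _; apply: val_inj.
Qed.

Definition fenc (phi : {ffun V -> 'I_4}) : {ffun 'I_n -> bool} :=
  [ffun i => bit (phi (vof i)) (odd i)].

Lemma fenc_idx phi v e : fenc phi (idx v e) = bit (phi v) e.
Proof. by rewrite ffunE vof_idx odd_idx. Qed.

Lemma fenc_inj : injective fenc.
Proof.
move=> phi psi e; apply/ffunP => v; apply: bit_inj.
  by rewrite -!fenc_idx e.
by rewrite -!fenc_idx e.
Qed.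

Definition I (v : V) (p : 'I_4) : {mpoly R[n]} :=
  L R (idx v false) (bit p false) * L R (idx v true) (bit p true).

Lemma msizeI v p : (msize (I v p) <= 3)%N.
Proof.
apply: leq_trans (msizeM2 _ _) _.
have := msizeL R (idx v false) (bit p false); have := msizeL R (idx v true) (bit p true).
lia.
Qed.

Lemma mevalI phi v p : meval (fun i => pm1 R (fenc phi i)) (I v p) = (p == phi v)%:R.
Proof.
have hL e b : meval (fun i => pm1 R (fenc phi i)) (L R (idx v e) b) = (b == bit (phi v) e)%:R.
  by apply: mevalL; rewrite fenc_idx.
rewrite /I mevalM !hL -natrM mulnb.
rewrite (_ : _ && _ = (p == phi v)) //; apply/andP/eqP => [[/eqP h1 /eqP h2]|->]; last by rewrite !eqxx.
exact: bit_inj.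
Qed.

Lemma sum_ind (a : 'I_4) (F : 'I_4 -> R) : \sum_(p : 'I_4) (p == a)%:R * F p = F a.
Proof.
rewrite (bigD1 a) //= eqxx mul1r big1 ?addr0 // => p /negbTE ->; by rewrite mul0r.
Qed.

Lemma msize_sum_le (J : Type) (r : seq J) (P : pred J) (F : J -> {mpoly R[n]}) m :
  (forall j, P j -> msize (F j) <= m)%N -> (msize (\sum_(j <- r | P j) F j) <= m)%N.
Proof.
move=> h; elim/big_ind: _ => //; first by rewrite msize0.
by move=> p q hp hq; apply: leq_trans (msizeD_le _ _) _; rewrite geq_max hp hq.
Qed.

Definition gg (p q r : 'I_4) : R := (ss p q r)%:R / (kk p q r)%:R - 3%:R^-1.

Definition Pc (c : constraint V) : {mpoly R[n]} :=
  let: (x, y, z) := c in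
  \sum_(p : 'I_4) I x p * (\sum_(q : 'I_4) I y q * (\sum_(r : 'I_4) I z r * (gg p q r)%:MP)).

Lemma msizePc c : (msize (Pc c) <= 7)%N.
Proof.
case: c => [[x y] z] /=; apply: msize_sum_le => p _.
apply: leq_trans (msizeM2 _ _) _.
have h1 := msizeI x p.
have : (msize (\sum_(q : 'I_4) I y q * (\sum_(r : 'I_4) I z r * (gg p q r)%:MP)) <= 5)%N.
  apply: msize_sum_le => q _; apply: leq_trans (msizeM2 _ _) _.
  have h2 := msizeI y q.
  have : (msize (\sum_(r : 'I_4) I z r * (gg p q r)%:MP) <= 3)%N.
    apply: msize_sum_le => r _; apply: leq_trans (msizeM2 _ _) _.
    apply: (predD_le (msizeI z r)); rewrite msizeC; by case: (_ != 0).
  exact: predD_le (msizeI y q).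
exact: predD_le (msizeI x p).
Qed.

Lemma mevalPc phi c : meval (fun i => pm1 R (fenc phi i)) (Pc c) =
  let: (x, y, z) := c in gg (phi x) (phi y) (phi z).
Proof.
case: c => [[x y] z] /=; rewrite raddf_sum /=.
under eq_bigr => p _ do rewrite mevalM mevalI raddf_sum /=.
rewrite sum_ind.
under eq_bigr => q _ do rewrite mevalM mevalI raddf_sum /=.
rewrite sum_ind.
under eq_bigr => r _ do rewrite mevalM mevalI mevalC.
by rewrite sum_ind.
Qed.

End Enc.

Local Open Scope ring_scope.

Lemma card_cnt_T (V : finType) (phi : {ffun V -> 'I_4}) :
  #|[set alpha | compatible phi alpha]| = cnt phi xpredT.
Proof. by rewrite -card_cnt; apply: eq_card => a; rewrite !inE andbT. Qed.

Lemma wC_gg (R : realFieldType) (V : finType) (x y z : V) phi : x != y -> x != z -> y != z ->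
  wC R (x, y, z) phi = @gg R (phi x) (phi y) (phi z).
Proof.
move=> xy xz yz; rewrite /wC /gg; congr (_ - _).
rewrite card_cnt card_cnt_T.
have M := main phi xy xz yz; have T := cnt_pos phi.
have k0 : (0 < kk (phi x) (phi y) (phi z))%N by rewrite /kk; do !case: ifP.
apply/eqP; rewrite eqr_div ?pnatr_eq0 -?lt0n // -!natrM M mulnC.
done.
Qed.

Unset Implicit Arguments.
Theorem lemma6 (R : realFieldType) (V : finType) (cs : seq (constraint V))
    (Hdist : all (@constraint_distinct V) cs) :
  exists (n : nat) (f : {ffun V -> 'I_4} -> {ffun 'I_n -> bool}) (P : {mpoly R[n]}),
    [/\ forall s : {ffun 'I_n -> bool}, (#|[set phi | f phi == s]| * 2 ^ n = 4 ^ #|V|)%N,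
        (msize P <= 7)%N
      & forall phi : {ffun V -> 'I_4},
          wCs R cs phi = meval (fun i => pm1 R (f phi i)) P].
Proof.
exists (#|V| * 2)%N, (@fenc V), (\sum_(c <- cs) Pc R c); split.
- move=> s.
  have hc : (#|{ffun 'I_(#|V| * 2) -> bool}| = #|{ffun V -> 'I_4}|)%N.
    by rewrite !card_ffun card_bool !card_ord mulnC expnM.
  have /codomP [phi0 ->] := inj_card_onto (@fenc_inj V) (eq_leq hc) s.
  have -> : [set phi | fenc phi == fenc phi0] = [set phi0].
    by apply/setP => phi; rewrite !inE; apply/eqP/eqP => [/fenc_inj|->].
  by rewrite cards1 mul1n mulnC expnM.
- by apply: msize_sum_le => c _; apply: msizePc.
- move=> phi; rewrite /wCs raddf_sum; apply: eq_big_seq => c cin.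
  have := allP Hdist c cin.
  case: c cin => [[x y] z] _ /= /and3P[xy xz yz].
  exact: (etrans (wC_gg R phi xy xz yz) (esym (mevalPc R phi (x, y, z)))).
Qed.
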